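(* Let $k$ be a field, $(X,\leq)$ a locally finite preordered set and $C=IC(X)$. For any $v\in X$, $S_v^*\simeq S'_v$ as right $C^*$-modules.
   Context: $(X,\leq)$ is a reflexive transitive relation with all intervals $[x,y]$ finite. $IC(X)$ has $k$-basis $\{e_{x,y}\mid x\leq y\}$, $\Delta(e_{x,y})=\sum_{x\leq z\leq y}e_{x,z}\otimes e_{z,y}$, $\varepsilon(e_{x,y})=\delta_{x,y}$. $x\sim y$ means $x\leq y$ and $y\leq x$. For $v\in X$ with $\sim$-class $\mathcal C$: $S_v=\sum_{y\in\mathcal C}k e_{v,y}$ (a simple right $C$-subcomodule of $C$) and $S'_v=\sum_{y\in\mathcal C}k e_{y,v}$ (a simple left $C$-subcomodule of $C$). $C^*$ is the dual algebra with convolution product $(fg)(c)=\sum f(c_1)g(c_2)$; $C$ is a left $C^*$-module via $c^*\rightharpoonup c=\sum c_1c^*(c_2)$ and a right $C^*$-module via $c\leftharpoonup c^*=\sum c^*(c_1)c_2$. $S_v$ is a left $C^*$-submodule, so $S_v^*$ is a right $C^*$-module via $(f\leftharpoonup c^* )(s)=f(c^*\rightharpoonup s)$; $S'_v$ is a right $C^*$-submodule of $C$. *)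

(* Defs.v *)
From HB Require Import structures.
From mathcomp Require Import all_boot all_order all_algebra.
Set Implicit Arguments. Unset Strict Implicit. Unset Printing Implicit Defensive.
Import GRing.Theory.
Local Open Scope ring_scope.

(* A locally finite preordered set (X, <=): reflexive, transitive relation
   with every interval [x,y] = {z | x <= z <= y} finite; the finiteness is
   witnessed by a duplicate-free enumeration [itv x y] of the interval. *)
Record lfpreorder (X : choiceType) := LFPreorder {
  le : rel X;
  le_refl : reflexive le;
  le_trans : transitive le;
  itv : X -> X -> seq X;
  itv_uniq : forall x y, uniq (itv x y);
  mem_itv : forall x y z, (z \in itv x y) = le x z && le z y }.

Section Incidence.
Variables (k : fieldType) (X : choiceType) (P : lfpreorder X).

Definition simP (x y : X) := le P x y && le P y x.

(* The ~-class of v is exactly the interval [v,v]. *)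
Definition cls (v : X) : seq X := itv P v v.
Definition clsT (v : X) := seq_sub (cls v).

(* Elements of C = IC(X) are represented by their coefficient function
   (a b) |-> coefficient of e_{a,b}.  An element c* of C-dual is determined by
   its values on the basis: (x,y) |-> c*(e_{x,y}) (values on pairs with
   not x <= y are never used). *)
Definition coefC := X -> X -> k.
Definition dualC := X -> X -> k.

Definition e (x y : X) : coefC := fun a b => ((a == x) && (b == y))%:R.

(* c* -> e_{x,y} = sum_{x<=z<=y} e_{x,z} c*(e_{z,y}) *)
Definition lact (c : dualC) (x y : X) : coefC :=
  fun a b => \sum_(z <- itv P x y) c z y * e x z a b.
(* e_{x,y} <- c* = sum_{x<=z<=y} c*(e_{x,z}) e_{z,y} *)
Definition ract (c : dualC) (x y : X) : coefC :=
  fun a b => \sum_(z <- itv P x y) c x z * e z y a b.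

(* S_v, in coordinates: s <-> sum_{y ~ v} s(y) e_{v,y} *)
Definition Sv (v : X) := {ffun clsT v -> k^o}.
(* S'_v, in coordinates: b <-> sum_{y ~ v} b(y) e_{y,v} *)
Definition S'v (v : X) := {ffun clsT v -> k^o}.

(* left C-dual-action on S_v: coordinate of e_{v,w} in c* -> s *)
Definition lact_S (v : X) (c : dualC) (s : Sv v) : Sv v :=
  [ffun w : clsT v => \sum_(y : clsT v) s y * lact c v (val y) v (val w)].

(* right C-dual-action on S'_v: coordinate of e_{w,v} in b <- c* *)
Definition ract_S' (v : X) (c : dualC) (b : S'v v) : S'v v :=
  [ffun w : clsT v => \sum_(y : clsT v) b y * ract c (val y) v (val w) v].

Definition Svdual (v : X) := 'Hom(Sv v, k^o).

Definition ract_dual (v : X) (c : dualC) (f : Svdual v) : Svdual v :=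
  (f \o linfun (lact_S c))%VF.

End Incidence.

(* Main.v *)
Require Import Defs.
From HB Require Import structures.
From mathcomp Require Import all_boot all_order all_algebra.
Local Open Scope ring_scope.
Import GRing.Theory.

Lemma sum_pick (k : fieldType) (X : eqType) (r : seq X) (w : X) (F : X -> k) :
  uniq r -> w \in r -> \sum_(z <- r) F z * (w == z)%:R = F w.
Proof.
move=> ur wr; rewrite (big_rem w) //= eqxx mulr1 big_seq big1 ?addr0 //.
move=> z; case: eqP => [<-|]; last by rewrite mulr0.
by rewrite mem_rem_uniqF.
Qed.

Section S.
Variables (k : fieldType) (X : choiceType) (P : lfpreorder X) (v : X).

Lemma cls_mem (w y : clsT P v) : val w \in itv P (val y) v /\ val w \in itv P v (val y).
Proof.
have := valP w; have := valP y; rewrite /cls !mem_itv => /andP[h1 h2] /andP[h3 h4].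
rewrite h3 h4 (le_trans h2 h3) (le_trans h4 h1); by split.
Qed.

Lemma lact_S_E (c : dualC k X) (s : Sv k P v) (w : clsT P v) :
  lact_S c s w = \sum_(y : clsT P v) s y * c (val w) (val y).
Proof.
rewrite ffunE; apply: eq_bigr => y _; congr (_ * _).
rewrite /lact /e eqxx /=.
by rewrite (@sum_pick _ _ _ _ (fun z => c z (val y))) //; [apply: itv_uniq| case: (cls_mem w y)].
Qed.

Lemma ract_S'_E (c : dualC k X) (b : S'v k P v) (w : clsT P v) :
  ract_S' c b w = \sum_(y : clsT P v) b y * c (val y) (val w).
Proof.
rewrite ffunE; apply: eq_bigr => y _; congr (_ * _).
rewrite /ract /e eqxx /=.
under eq_bigr do rewrite andbT.
by rewrite (@sum_pick _ _ _ _ (fun z => c (val y) z)) //; [apply: itv_uniq| case: (cls_mem w y)].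
Qed.

Definition delta (w : clsT P v) : Sv k P v := [ffun u => (u == w)%:R].

Definition phi (f : Svdual k P v) : S'v k P v := [ffun w => f (delta w)].

Definition psi_fun (b : S'v k P v) (s : Sv k P v) : k^o := \sum_y s y * b y.

Lemma psi_lin b : linear (psi_fun b).
Proof.
move=> a s t; rewrite /psi_fun /= scaler_sumr -big_split /=.
by apply: eq_bigr => y _; rewrite !ffunE mulrDl -mulrA.
Qed.

HB.instance Definition _ b := GRing.isLinear.Build k (Sv k P v) k^o *:%R (psi_fun b) (psi_lin b).

Definition psi (b : S'v k P v) : Svdual k P v := linfun (psi_fun b).

Lemma lact_lin (c : dualC k X) : linear (@lact_S k X P v c).
Proof.
move=> a s t.
have E : forall s, @lact_S k X P v c s = [ffun w => \sum_(y : clsT P v) s y * c (val w) (val y)].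
  by move=> s'; apply/ffunP => w; rewrite lact_S_E ffunE.
rewrite !E; apply/ffunP => w; rewrite !ffunE.
rewrite scaler_sumr -big_split /=.
by apply: eq_bigr => y _; rewrite !ffunE mulrDl -mulrA.
Qed.

HB.instance Definition _ c := GRing.isLinear.Build k (Sv k P v) (Sv k P v) *:%R (@lact_S k X P v c) (lact_lin c).

Lemma s_decomp (s : Sv k P v) : s = \sum_y s y *: delta y.
Proof.
apply/ffunP => w; rewrite sum_ffunE (bigD1 w) //= big1 ?addr0.
  by rewrite !ffunE eqxx /= [RHS]mulr1.
by move=> y yw; rewrite !ffunE eq_sym (negbTE yw) [LHS]mulr0.
Qed.

Lemma f_decomp (f : Svdual k P v) s : f s = \sum_y s y * f (delta y).
Proof. by rewrite {1}(s_decomp s) linear_sum; apply: eq_bigr => y _; rewrite linearZ. Qed.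

End S.

Theorem mainTheorem9 (k : fieldType) (X : choiceType) (P : lfpreorder X) (v : X) :
  exists phi : Svdual k P v -> S'v k P v,
    [/\ linear phi, bijective phi &
        forall (c : dualC k X) (f : Svdual k P v),
          phi (ract_dual c f) = ract_S' c (phi f)].
Proof.
exists (@phi k X P v); split.
- move=> a f g; apply/ffunP => w; rewrite !ffunE add_lfunE scale_lfunE.
  by [].
- exists (@psi k X P v).
    move=> f; apply/lfunP => s; rewrite lfunE /= /psi_fun (@f_decomp _ _ _ _ f s).
    by apply: eq_bigr => y _; rewrite ffunE.
  move=> b; apply/ffunP => w; rewrite ffunE lfunE /= /psi_fun (bigD1 w) //= big1 ?addr0.
    by rewrite ffunE eqxx mul1r.
  by move=> y yw; rewrite ffunE (negbTE yw) mul0r.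
- move=> c f; apply/ffunP => w; rewrite ract_S'_E ffunE /ract_dual comp_lfunE lfunE /=.
  rewrite f_decomp; apply: eq_bigr => y _; rewrite lact_S_E mulrC ffunE.
  congr (_ * _); rewrite (bigD1 w) //= big1 ?addr0.
    by rewrite ffunE eqxx mul1r.
  by move=> u uw; rewrite ffunE (negbTE uw) mul0r.
Qed.
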